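(* For the merging problem with $n$ items and $k\le n$ slots (with $a_i\ge 0$ almost surely and $o_i\ge 0$, and arbitrary, not necessarily identical, distributions $G_i$), the G-CHANGE mechanism is $1/2$-approximate: $\mathrm{OBJ}(\mathcal M^C)\ge\frac12\mathrm{OBJ}(\mathcal M^* )$.
   Context: Merging problem: $n$ items indexed by $[n]$, $k\le n$ slots. Each item $i$ has a random ad value $a_i$, drawn independently from a regular distribution $G_i$ ($\boldsymbol a\sim G=\times_i G_i$), and a fixed organic value $o_i\ge0$. A mechanism is a pair of allocation rules $x,y$ with $x_i(\boldsymbol a),y_i(\boldsymbol a)\in\{0,1\}$ ($x_i=1$: item $i$ shown as ad; $y_i=1$: shown organically) satisfying for all $\boldsymbol a,i$: (i) $\sum_i(x_i+y_i)\le k$; (ii) $x_i+y_i\le 1$; (iii) $y_i(a_i,\boldsymbol a_{-i})$ independent of $a_i$; (iv) $x_i(a_i,\boldsymbol a_{-i})$ non-decreasing in $a_i$. Objective $\mathrm{OBJ}=\mathbb E_{\boldsymbol a\sim G}[\sum_i(a_ix_i(\boldsymbol a)+o_iy_i(\boldsymbol a))]$; $\mathcal M^*$ maximizes it subject to (i)–(iv). A mechanism $\mathcal M$ is $\tau$-approximate if $\mathrm{OBJ}(\mathcal M)/\mathrm{OBJ}(\mathcal M^* )\ge\tau$. Notation: $\max^{(m)}S$ is the sum of the $m$ largest elements of a finite multiset $S$ ($\max^{(0)}S=0$); $\mathbb E_{a_j}[\cdot]$ denotes expectation over $a_j\sim G_j$ only, the other coordinates held fixed. G-CHANGE-$I$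 mechanism $\mathcal M^C_I$, for an ordered list $I=(i_1,\dots,i_k)$ of distinct items: for $t\in[k]$ let $R_t=\sum_{j=1}^{t-1}o_{i_j}+\max^{(k-t)}\{a_i: i\notin\{i_1,\dots,i_t\}\}$, and define recursively $w_{i_1}^{\boldsymbol a}=\mathbb E_{a_{i_1}}[\max^{(k)}\{a_1,\dots,a_n\}]-R_1$ and, for $t>1$, $w_{i_t}^{\boldsymbol a}=\mathbb E_{a_{i_t}}[\max\{o_{i_{t-1}}+R_{t-1},\,w_{i_{t-1}}^{\boldsymbol a}+R_{t-1}\}]-R_t$. Let $s^*$ be the largest $s\in[k]$ with $o_{i_s}\ge w_{i_s}^{\boldsymbol a}$ and $o_{i_t}<w_{i_t}^{\boldsymbol a}$ for all $t>s$ (and $s^*=0$ if none). The mechanism shows $i_1,\dots,i_{s^*}$ in organic form and shows as ads the $k-s^*$ items outside $\{i_1,\dots,i_{s^*}\}$ with the largest $a_i$. Its objective is $\mathrm{OBJ}(\mathcal M^C_I)=\mathbb E_{\boldsymbol a\sim G}\big[\max\{\sum_{j=1}^k o_{i_j},\ w_{i_k}^{\boldsymbol a}+\sum_{j=1}^{k-1}o_{i_j}\}\big]$. The G-CHANGE mechanism $\mathcal M^C$ runs the $\mathcal M^C_I$ of highest objective over all ordered lists $I$ of $k$ distinct items of $[n]$, so $\mathrm{OBJ}(\mathcal M^C)=\max_I\mathrm{OBJ}(\mathcal M^C_I)$. *)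

(* Defs.v *)
From HB Require Import structures.
From mathcomp Require Import all_boot all_order all_algebra.
From mathcomp Require Import all_classical all_reals all_analysis.

Set Implicit Arguments.
Unset Strict Implicit.
Unset Printing Implicit Defensive.

Import Order.TTheory GRing.Theory Num.Theory.
Local Open Scope ring_scope.
Local Open Scope classical_set_scope.
Local Open Scope ereal_scope.

Section Merging.
Variables (R : realType) (n k : nat).
Variables (G : 'I_n -> probability R R) (o : 'I_n -> R).

(* A profile of ad values a = (a_1,...,a_n), as an n-tuple (measurable
   space with the product sigma-algebra generated by the coordinates). *)
Definition vec := n.-tuple R.

Definition set_coord (a : vec) (j : 'I_n) (t : R) : vec :=
  [tuple (if i == j then t else tnth a i) | i < n].

Definition topsum (m : nat) (s : seq R) : R :=
  (\sum_(x <- take m (sort (fun x y : R => y <= x) s)) x)%R.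

Definition Ecoord (j : 'I_n) (F : vec -> \bar R) (a : vec) : \bar R :=
  \int[G j]_(t in [set: R]) F (set_coord a j t).

(* E_{a ~ G}[F], G = product of the G_i : iterated integral over all the
   coordinates (equal to the product-measure integral by Fubini-Tonelli) *)
Definition Eprod (F : vec -> \bar R) : \bar R :=
  foldr (fun j acc => Ecoord j acc) F (enum 'I_n) [tuple (0:R)%R | _ < n].

Definition feasible (x y : 'I_n -> vec -> bool) : Prop :=
  [/\ forall a, (\sum_(i < n) (x i a + y i a) <= k)%N,
      forall a i, (x i a + y i a <= 1)%N,
      forall a i t, y i (set_coord a i t) = y i a,
      forall a i t t', (t <= t')%R -> x i (set_coord a i t) ==> x i (set_coord a i t')
    & forall i, measurable [set a : vec | x i a] /\ measurable [set a : vec | y i a]].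

Definition OBJ (x y : 'I_n -> vec -> bool) : \bar R :=
  Eprod (fun a => (\sum_(i < n) (tnth a i * (x i a)%:R + o i * (y i a)%:R))%R%:E).

(* G-CHANGE-I, for an ordered list I = (i_1,...,i_k); everything below is
   0-indexed: item number s (0 <= s < k) is i_{s+1} = nth d I s. *)
Section GChangeI.
Variables (I : seq 'I_n) (d : 'I_n).

Definition Rt (s : nat) (a : vec) : R :=
  (\sum_(i <- take s I) o i +
   topsum (k - s.+1) [seq tnth a i | i <- enum 'I_n & i \notin take s.+1 I])%R.

Fixpoint w (s : nat) : vec -> \bar R :=
  match s with
  | 0 => fun a =>
      Ecoord (nth d I 0) (fun b => (topsum k [seq tnth b i | i <- enum 'I_n])%:E) a
      - (Rt 0 a)%:E
  | s'.+1 => fun a =>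
      Ecoord (nth d I s)
        (fun b => maxe ((o (nth d I s') + Rt s' b)%R%:E) (w s' b + (Rt s' b)%:E)) a
      - (Rt s a)%:E
  end.

End GChangeI.

Definition OBJ_GChangeI (I : seq 'I_n) : \bar R :=
  match I with
  | [::] => 0
  | d :: _ =>
      Eprod (fun a => maxe ((\sum_(i <- I) o i)%R%:E)
                           (w I d k.-1 a + (\sum_(i <- take k.-1 I) o i)%R%:E))
  end.

Definition OBJ_GChange : \bar R :=
  \big[Order.max/-oo]_(I : k.-tuple 'I_n | uniq I) OBJ_GChangeI I.

End Merging.

(* Main.v *)
Require Import Defs.
From HB Require Import structures.
From mathcomp Require Import all_boot all_order all_algebra.
From mathcomp Require Import all_classical all_reals all_analysis.
From mathcomp Require Import measurable_realfun.
Import Order.TTheory GRing.Theory Num.Theory.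
Local Open Scope ring_scope.
Local Open Scope classical_set_scope.
Local Open Scope ereal_scope.

Section IntLemmas.
Context (R : realType) (mu : probability R R).
Hypothesis mu0 : mu [set t : R | t < 0]%R = 0.
Import HBNNSimple.

Lemma int_ub (g : R -> \bar R) (h : {nnsfun R >-> R}) :
  (forall x, 0 <= g x) -> (forall x, (h x)%:E <= g x) ->
  sintegral mu h <= \int[mu]_x g x.
Proof. by move=> g0 hg; rewrite ge0_integralTE //; apply: ereal_sup_ubound; exists h. Qed.

Lemma int_le_supM (f : R -> \bar R) (M : \bar R) : (forall x, 0 <= f x) ->
  (forall h : {nnsfun R >-> R}, (forall x, (h x)%:E <= f x) ->
     sintegral mu h <= M) ->
  \int[mu]_x f x <= M.
Proof. by move=> f0 H; rewrite (ge0_integralTE _ f0); apply: ge_ereal_sup => _ [h hf <-]; exact: H. Qed.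

Lemma int_le_sup (f g : R -> \bar R) : (forall x, 0 <= f x) ->
  (forall h : {nnsfun R >-> R}, (forall x, (h x)%:E <= f x) ->
     sintegral mu h <= \int[mu]_x g x) ->
  \int[mu]_x f x <= \int[mu]_x g x.
Proof. by move=> f0 H; rewrite (ge0_integralTE _ f0); apply: ge_ereal_sup => _ [h hf <-]; exact: H. Qed.

Lemma int_mono0 (f g : R -> \bar R) : (forall x, 0 <= f x) -> (forall x, f x <= g x) ->
  \int[mu]_x f x <= \int[mu]_x g x.
Proof.
move=> f0 fg; apply: int_le_sup => // h hf; apply: int_ub.
  by move=> x; exact: le_trans (f0 x) (fg x).
by move=> x; exact: le_trans (hf x) (fg x).
Qed.

Lemma mneg : measurable [set t : R | t < 0]%R.
Proof.
have -> : [set t : R | t < 0]%R = [set` `]-oo, 0[%R].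
  by apply/seteqP; split => t /=; rewrite in_itv /=.
exact: measurable_itv.
Qed.

Lemma int_ae0 (f g : R -> \bar R) : (forall x, 0 <= f x) -> (forall x, 0 <= g x) ->
  (forall x, (0 <= x)%R -> f x <= g x) ->
  \int[mu]_x f x <= \int[mu]_x g x.
Proof.
move=> f0 g0 fg; apply: int_le_sup => // h hf.
pose phi := fun t => ((h t) * (\1_[set t : R | 0 <= t]%R t))%R%:E.
have mh : measurable_fun setT (h : R -> R) by exact: measurable_funPT.
have mphi : measurable_fun setT (EFin \o (fun t => (h t * \1_[set t : R | 0 <= t]%R t)%R)).
  apply/measurable_EFinP; apply: measurable_funM => //.
  apply: measurable_indic.
  have -> : [set t : R | 0 <= t]%R = [set` `[0, +oo[%R].
    by apply/seteqP; split => t /=; rewrite in_itv /= ?andbT.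
  exact: measurable_itv.
apply: (@le_trans _ _ (\int[mu]_x phi x)).
  have := @integral_nnsfun _ _ _ mu setT measurableT h; rewrite patch_setT => <-.
  apply: (@ae_ge0_le_integral _ _ _ mu setT measurableT (fun x => (h x)%:E) phi).
  - by move=> x _; rewrite lee_fin.
  - by apply/measurable_EFinP.
  - by move=> x _; rewrite /phi lee_fin mulr_ge0 // indicE; case: (_ \in _).
  - exact: mphi.
  - exists [set t : R | t < 0]%R; split; [exact: mneg|exact: mu0|].
    move=> t /=; apply: contra_notP => /negP; rewrite -leNgt => t0 _.
    by rewrite /phi indicE mem_set // mulr1.
apply: int_mono0.
  by move=> x; rewrite lee_fin mulr_ge0 // indicE; case: (_ \in _).
move=> x; rewrite /phi indicE; case: (boolP (x \in _)) => [/set_mem xi|_].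
  by rewrite mulr1; exact: le_trans (hf x) (fg x xi).
by rewrite mulr0; exact: g0.
Qed.


Lemma int_ae (f g : R -> \bar R) :
  (forall x, (0 <= x)%R -> f x <= g x) ->
  \int[mu]_x f x <= \int[mu]_x g x.
Proof.
move=> fg; rewrite (integralE _ _ f) (integralE _ _ g); apply: leeB.
  apply: int_ae0 => [x|x|x x0]; rewrite ?funepos_ge0 //.
  apply: (@funepos_le _ _ [set x : R | 0 <= x]%R); last exact/mem_set.
  by move=> y /set_mem; exact: fg.
apply: int_ae0 => [x|x|x x0]; rewrite ?funeneg_ge0 //.
apply: (@funeneg_le _ _ [set x : R | 0 <= x]%R); last exact/mem_set.
by move=> y /set_mem; exact: fg.
Qed.

Lemma int_shift (f : R -> \bar R) (c : R) : (0 <= c)%R ->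
  (forall x, (0 <= x)%R -> 0 <= f x) ->
  \int[mu]_x (f x + c%:E) <= \int[mu]_x f x + c%:E.
Proof.
move=> c0 f0.
pose ft := fun x => if (0 <= x)%R then f x else 0.
have ft0 x : 0 <= ft x by rewrite /ft; case: ifPn => // /f0.
apply: (@le_trans _ _ (\int[mu]_x (ft x + c%:E))).
  by apply: int_ae => x x0; rewrite /ft x0.
apply: (@le_trans _ _ (\int[mu]_x ft x + c%:E)); last first.
  by apply: leeD => //; apply: int_ae => x x0; rewrite /ft x0.
apply: int_le_supM => [x|h hf]; first by rewrite adde_ge0.
pose psi := fun x => (Num.max (h x - c) 0)%R.
have mh : measurable_fun setT (h : R -> R) by exact: measurable_funPT.
have mpsi : measurable_fun setT psi.
  by apply: measurable_maxr => //; apply: measurable_funB.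
have := @integral_nnsfun _ _ _ mu setT measurableT h; rewrite patch_setT => <-.
apply: (@le_trans _ _ (\int[mu]_x ((psi x)%:E + (cst c%:E) x))).
  apply: int_mono0 => x; first by rewrite lee_fin.
  rewrite /= -EFinD lee_fin /psi -lerBlDr.
  by rewrite le_max lexx.
rewrite ge0_integralD //; first last.
- by apply/measurable_EFinP.
- by move=> x _; rewrite lee_fin le_max lexx orbT.
rewrite integral_cst //.
set M := (X in (_ + _ * X)%E).
have -> : M = 1 by exact: probability_setT.
rewrite mule1; apply: leeD => //.
apply: int_mono0 => x; first by rewrite lee_fin le_max lexx orbT.
rewrite /psi EFin_max ge_max; apply/andP; split; last exact: ft0.
by rewrite EFinB leeBlDr.
Qed.

End IntLemmas.

Section Coord.
Context (R : realType) (n : nat) (G : 'I_n -> probability R R).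
Hypothesis hG : forall i, G i [set t : R | t < 0]%R = 0.

Definition Pos (a : vec R n) := forall i, (0 <= tnth a i)%R.

Lemma tnth_sc (a : vec R n) j t i :
  tnth (set_coord a j t) i = if i == j then t else tnth a i.
Proof. by rewrite /set_coord tnth_mktuple. Qed.

Lemma sc_same (a : vec R n) j t s : set_coord (set_coord a j t) j s = set_coord a j s.
Proof. by apply: eq_from_tnth => i; rewrite !tnth_sc; case: (i == j). Qed.

Lemma sc_comm (a : vec R n) j l t s : j != l ->
  set_coord (set_coord a l t) j s = set_coord (set_coord a j s) l t.
Proof.
move=> jl; apply: eq_from_tnth => i; rewrite !tnth_sc.
by case: (eqVneq i j) => [->|//]; rewrite (negbTE jl).
Qed.

Lemma Pos_sc (a : vec R n) j t : Pos a -> (0 <= t)%R -> Pos (set_coord a j t).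
Proof. by move=> Pa t0 i; rewrite tnth_sc; case: (i == j). Qed.

Definition indep (F : vec R n -> \bar R) j := forall a t, F (set_coord a j t) = F a.

Lemma Ec_mono (F F' : vec R n -> \bar R) j :
  (forall a, Pos a -> F a <= F' a) -> forall a, Pos a -> Ecoord G j F a <= Ecoord G j F' a.
Proof.
move=> FF a Pa; rewrite /Ecoord; apply: (@int_ae _ _ (hG j)) => t t0; apply: FF; exact: Pos_sc.
Qed.

Lemma Ec_ge0 (F : vec R n -> \bar R) j :
  (forall a, Pos a -> 0 <= F a) -> forall a, Pos a -> 0 <= Ecoord G j F a.
Proof.
move=> F0 a Pa; rewrite -(integral0 (G j) setT).
rewrite /Ecoord; apply: (@int_ae _ _ (hG j)) => t t0; apply: F0; exact: Pos_sc.
Qed.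

Lemma Ec_shift (F : vec R n -> \bar R) j (c : R) : (0 <= c)%R ->
  (forall a, Pos a -> 0 <= F a) ->
  forall a, Pos a -> Ecoord G j (fun b => F b + c%:E) a <= Ecoord G j F a + c%:E.
Proof.
move=> c0 F0 a Pa; rewrite /Ecoord; apply: (@int_shift _ _ (hG j)) => // t t0; apply: F0; exact: Pos_sc.
Qed.

Lemma Ec_indep_self (F : vec R n -> \bar R) j : indep (Ecoord G j F) j.
Proof. by move=> a t; rewrite /Ecoord; apply: eq_integral => s _; rewrite sc_same. Qed.

Lemma Ec_indep (F : vec R n -> \bar R) j l : indep F l -> indep (Ecoord G j F) l.
Proof.
move=> Fl; case: (eqVneq j l) => [<-|jl]; first exact: Ec_indep_self.
move=> a t; rewrite /Ecoord; apply: eq_integral => s _.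
by rewrite sc_comm // Fl.
Qed.

Lemma Ec_id (F : vec R n -> \bar R) j : indep F j -> Ecoord G j F = F.
Proof.
move=> Fj; apply/funext => a; rewrite /Ecoord.
rewrite (eq_integral (cst (F a))); last by move=> t _; rewrite Fj.
rewrite integral_cst //.
set M := (X in (_ * X)%E).
have -> : M = 1 by exact: probability_setT.
by rewrite mule1.
Qed.

Definition compE (js : seq 'I_n) (F : vec R n -> \bar R) := foldr (Ecoord G) F js.

Lemma compE_mono js F F' :
  (forall a, Pos a -> F a <= F' a) -> forall a, Pos a -> compE js F a <= compE js F' a.
Proof. by elim: js => //= j js IH FF; apply: Ec_mono; exact: IH. Qed.

Lemma compE_ge0 js F :
  (forall a, Pos a -> 0 <= F a) -> forall a, Pos a -> 0 <= compE js F a.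
Proof. by elim: js => //= j js IH F0; apply: Ec_ge0; exact: IH. Qed.

Lemma compE_shift js F (c : R) : (0 <= c)%R ->
  (forall a, Pos a -> 0 <= F a) ->
  forall a, Pos a -> compE js (fun b => F b + c%:E) a <= compE js F a + c%:E.
Proof.
move=> c0 F0; elim: js => [|j js IH] a Pa //=.
apply: (@le_trans _ _ (Ecoord G j (fun b => compE js F b + c%:E) a)).
  by apply: Ec_mono => // b Pb; exact: IH.
by apply: Ec_shift => //; apply: compE_ge0.
Qed.

Lemma compE_indep js F l : indep F l -> indep (compE js F) l.
Proof. by elim: js => //= j js IH Fl; apply: Ec_indep; exact: IH. Qed.

Lemma compE_indep_in js F l : l \in js -> indep (compE js F) l.
Proof.
elim: js => //= j js IH; rewrite inE => /predU1P[->|lj].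
  exact: Ec_indep_self.
by apply: Ec_indep; exact: IH.
Qed.

Lemma compE_id js F : (forall l, l \in js -> indep F l) -> compE js F = F.
Proof.
elim: js => //= j js IH Fl; rewrite IH; first by apply: Ec_id; apply: Fl; rewrite mem_head.
by move=> l lj; apply: Fl; rewrite inE lj orbT.
Qed.

Lemma compE_cst js (c : \bar R) : compE js (fun _ => c) = (fun _ => c).
Proof. by apply: compE_id. Qed.

Definition z0 : vec R n := [tuple (0:R)%R | _ < n].

Lemma Pos_z0 : Pos z0.
Proof. by move=> i; rewrite tnth_mktuple. Qed.

Lemma Eprod_compE F : Eprod G F = compE (enum 'I_n) F z0.
Proof. by []. Qed.

End Coord.
Arguments Pos {R n}.
Arguments compE {R n}.
Arguments indep {R n}.
Arguments z0 {R n}.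

Section Comb.
Context (R : realType).
Local Open Scope ring_scope.

Local Notation geR := (fun x y : R => y <= x).

Lemma geR_tr : transitive geR.
Proof. by move=> y x z /= yx zy; exact: le_trans zy yx. Qed.

Lemma geR_total : total geR.
Proof. by move=> x y /=; exact: le_total. Qed.

Lemma sorted_sub (t v : seq R) : sorted geR t -> subseq v t ->
  \sum_(x <- v) x <= \sum_(x <- take (size v) t) x.
Proof.
elim: t v => [|x t IH] v.
  by move=> _; rewrite subseq0 => /eqP ->; rewrite !big_nil.
move=> st; have stt : sorted geR t by exact: path_sorted st.
have allx : all (geR x) t by exact: order_path_min geR_tr st.
case: v => [|y v]; first by rewrite !big_nil.
rewrite /= [in X in X -> _]/subseq -/subseq.
case: eqP => [->|_] sv.
  by rewrite !big_cons lerD2l; exact: IH.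
have := IH _ stt sv; rewrite /= => H; apply: le_trans H _.
have szt : (size v < size t)%N by have := size_subseq sv.
rewrite (take_nth 0 szt) -cats1 big_cat /= big_cons big_nil addr0 big_cons.
rewrite addrC lerD2r.
by have := allP allx _ (mem_nth 0 szt).
Qed.

Lemma sum_take_mono (t : seq R) j m : (j <= m)%N -> (forall x, x \in t -> 0 <= x) ->
  \sum_(x <- take j t) x <= \sum_(x <- take m t) x.
Proof.
move=> jm t0; rewrite -(subnKC jm) takeD big_cat /= lerDl.
rewrite big_seq; apply: sumr_ge0 => x /mem_take /mem_drop; exact: t0.
Qed.

End Comb.

Section Comb2.
Context (R : realType).
Local Open Scope ring_scope.
Local Notation geR := (fun x y : R => y <= x).

Lemma topsum_sub (l u : seq R) m : subseq u l -> (size u <= m)%N ->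
  (forall x, x \in l -> 0 <= x) -> \sum_(x <- u) x <= topsum m l.
Proof.
move=> su um l0; rewrite /topsum.
have ss := subseq_sort (@geR_total R) (@geR_tr R) su.
have pu : perm_eq (sort geR u) u by rewrite perm_sort.
rewrite -(perm_big _ pu).
have := @sorted_sub R _ _ (sort_sorted (@geR_total R) l) ss; move/le_trans; apply.
rewrite size_sort; apply: (@sum_take_mono R) => // x; rewrite mem_sort; exact: l0.
Qed.

Lemma topsum_ge0 (l : seq R) m : (forall x, x \in l -> 0 <= x) -> 0 <= topsum m l.
Proof.
move=> l0; rewrite /topsum big_seq; apply: sumr_ge0 => x /mem_take.
rewrite mem_sort; exact: l0.
Qed.

End Comb2.

Section Chain.
Context (R : realType) (n k : nat) (G : 'I_n -> probability R R) (o : 'I_n -> R).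
Hypothesis hG : forall i, G i [set t : R | t < 0]%R = 0.

Definition Tf : vec R n -> \bar R :=
  fun b => (topsum k [seq tnth b i | i <- enum 'I_n])%:E.

Lemma chain (I : seq 'I_n) (d : 'I_n) s : (s < size I)%N -> forall a, Pos a ->
  compE G (rev (take s.+1 I)) Tf a <= w k G o I d s a + (Rt k o I s a)%:E.
Proof.
elim: s => [|s IH] sI a Pa.
  case: I sI => [//|i0 I] _ /=.
  rewrite -addeA -EFinD addNr adde0 take0 /=; exact: lexx.
rewrite (take_nth d sI) rev_rcons /=.
rewrite -addeA -EFinD addNr adde0.
apply: (@Ec_mono _ _ _ hG) => // b Pb.
have := IH (ltnW sI) b Pb; move/le_trans; apply.
by rewrite le_max lexx orbT.
Qed.

End Chain.
Arguments Tf {R n} k.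

Lemma count_enum n (P : pred 'I_n) : count P (enum 'I_n) = (\sum_(i < n) P i)%N.
Proof.
have -> : count P (enum 'I_n) = (\sum_(i <- enum 'I_n) P i)%N.
  by elim: (enum 'I_n) => [|x s IH]; rewrite ?big_nil ?big_cons //= IH.
by rewrite big_enum.
Qed.

Section Main.
Context (R : realType) (n k : nat) (G : 'I_n -> probability R R) (o : 'I_n -> R).
Hypothesis hk : (0 < k)%N.
Hypothesis hkn : (k <= n)%N.
Hypothesis hG : forall i, G i [set t : R | t < 0]%R = 0.
Hypothesis ho : forall i, (0 <= o i)%R.

Lemma GC_le (s : seq 'I_n) : size s == k -> uniq s ->
  OBJ_GChangeI k G o s <= OBJ_GChange k G o.
Proof.
move=> sk us; rewrite /OBJ_GChange.
exact: (@le_bigmax_cond _ _ _ _ (Tuple sk) (fun I : k.-tuple 'I_n => uniq I)).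
Qed.

Lemma GC_ge_sum (s : seq 'I_n) : s != [::] ->
  (\sum_(i <- s) o i)%:E <= OBJ_GChangeI k G o s.
Proof.
case: s => [//|d s'] _; rewrite /OBJ_GChangeI Eprod_compE.
have := @compE_mono _ _ _ hG (enum 'I_n) (fun _ => (\sum_(i <- d :: s') o i)%:E) _ _ z0 (@Pos_z0 _ _).
rewrite compE_cst; apply => b Pb.
by rewrite le_max lexx.
Qed.

Lemma Rt_last (I : seq 'I_n) (b : vec R n) :
  Rt k o I k.-1 b = (\sum_(i <- take k.-1 I) o i)%R.
Proof.
by rewrite /Rt prednK // subnn /topsum take0 big_nil addr0.
Qed.

Lemma GC_ge_T (I : seq 'I_n) : I = rev (drop (n - k) (enum 'I_n)) ->
  Eprod G (Tf k) <= OBJ_GChangeI k G o I.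
Proof.
move=> EI.
have sI : size I = k by rewrite EI size_rev size_drop size_enum_ord subKn.
set L1 := take (n - k) (enum 'I_n); set L2 := drop (n - k) (enum 'I_n).
have E2 : compE G L2 (compE G L2 (Tf k)) = compE G L2 (Tf k).
  by apply: compE_id => l lL2; apply: compE_indep_in.
have EE : Eprod G (Tf k) = Eprod G (compE G L2 (Tf k)).
  have Ecat F : Eprod G F = compE G L1 (compE G L2 F) z0.
    by rewrite Eprod_compE -{1}(cat_take_drop (n - k) (enum 'I_n)) /compE foldr_cat.
  by rewrite !Ecat E2.
rewrite EE.
have L2I : L2 = rev (take k.-1.+1 I) by rewrite prednK // -sI take_size EI revK.
case EI' : I sI => [|d I'] sI; first by move: hk; rewrite -sI.
have form : OBJ_GChangeI k G o I = Eprod G (fun a => maxe ((\sum_(i <- I) o i)%R%:E)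
      (w k G o I d k.-1 a + (\sum_(i <- take k.-1 I) o i)%R%:E)) by rewrite EI'.
rewrite -EI' form Eprod_compE Eprod_compE.
apply: (@compE_mono _ _ _ hG) => [b Pb|]; last exact: Pos_z0.
rewrite L2I.
have := @chain R n k G o hG I d k.-1; rewrite EI' sI prednK // => /(_ (ltnSn _) b Pb).
rewrite -EI' => /le_trans; apply.
by rewrite Rt_last le_max lexx orbT.
Qed.

End Main.

Section Final.
Context (R : realType) (n k : nat) (G : 'I_n -> probability R R) (o : 'I_n -> R).
Hypothesis hk : (0 < k)%N.
Hypothesis hkn : (k <= n)%N.
Hypothesis hG : forall i, G i [set t : R | t < 0]%R = 0.
Hypothesis ho : forall i, (0 <= o i)%R.

Lemma Tf_ge0 (a : vec R n) : Pos a -> 0 <= Tf k a.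
Proof.
move=> Pa; rewrite /Tf lee_fin; apply: topsum_ge0 => v /mapP [i _ ->]; exact: Pa.
Qed.

Lemma pw (x y : 'I_n -> vec R n -> bool) (a : vec R n) (c : R) :
  (\sum_(i < n) (x i a + y i a) <= k)%N -> Pos a ->
  (forall s : seq 'I_n, size s == k -> uniq s -> (\sum_(i <- s) o i <= c)%R) ->
  (\sum_(i < n) (tnth a i * (x i a)%:R + o i * (y i a)%:R))%R%:E <= Tf k a + c%:E.
Proof.
move=> fs Pa hc; rewrite /Tf -EFinD lee_fin big_split /=; apply: lerD.
  have -> : (\sum_(i < n) tnth a i * (x i a)%:R =
      \sum_(v <- [seq tnth a i | i <- enum 'I_n & x i a]) v)%R.
    rewrite big_map big_filter big_enum_cond [RHS]big_mkcond /=.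
    by apply: eq_bigr => i _; case: (x i a); rewrite ?mulr1 ?mulr0.
  apply: topsum_sub.
  - by apply: map_subseq; apply: filter_subseq.
  - rewrite size_map size_filter count_enum; apply: leq_trans fs.
    by apply: leq_sum => i _; apply: leq_addr.
  - by move=> v /mapP [i _ ->]; exact: Pa.
set Ys := [seq i <- enum 'I_n | y i a]; set Yc := [seq i <- enum 'I_n | ~~ y i a].
have sYs : (size Ys <= k)%N.
  rewrite size_filter count_enum; apply: leq_trans fs.
  by apply: leq_sum => i _; apply: leq_addl.
have sYc : (size Ys + size Yc = n)%N.
  by rewrite !size_filter count_predC size_enum_ord.
set s := Ys ++ take (k - size Ys) Yc.
have ss : size s == k.
  rewrite size_cat size_takel; first by rewrite subnKC.
  by rewrite leq_subLR sYc.
have us : uniq s.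
  rewrite cat_uniq filter_uniq ?enum_uniq //= (take_uniq _ (filter_uniq _ (enum_uniq _))) andbT.
  apply/hasPn => i /mem_take; rewrite mem_filter => /andP[ny _].
  by rewrite mem_filter (negbTE ny).
apply: le_trans (hc s ss us).
have -> : (\sum_(i < n) o i * (y i a)%:R = \sum_(i <- Ys) o i)%R.
  rewrite big_filter big_enum_cond [RHS]big_mkcond /=.
  by apply: eq_bigr => i _; case: (y i a); rewrite ?mulr1 ?mulr0.
rewrite /s big_cat /= lerDl.
by apply: sumr_ge0 => i _.
Qed.

End Final.

Theorem theorem6 (R : realType) (n k : nat) (G : 'I_n -> probability R R)
  (o : 'I_n -> R) :
  (0 < k)%N -> (k <= n)%N ->
  (forall i, G i [set t : R | t < 0]%R = 0) ->
  (forall i, (0 <= o i)%R) ->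
  forall x y : 'I_n -> vec R n -> bool,
    feasible k x y ->
    OBJ G o x y <= 2%:E * OBJ_GChange k G o.
Proof.
move=> hk hkn hG ho x y [fs fb fy fx fm].
pose I0 := rev (drop (n - k) (enum 'I_n)).
have sI0 : size I0 == k by rewrite size_rev size_drop size_enum_ord subKn.
have uI0 : uniq I0 by rewrite rev_uniq drop_uniq // enum_uniq.
have nI0 : I0 != [::] by apply/eqP => E; move: sI0 hk; rewrite E /= => /eqP <-.
have hT : Eprod G (Tf k) <= OBJ_GChange k G o.
  exact: le_trans (@GC_ge_T R n k G o hk hkn hG I0 (erefl I0)) (@GC_le R n k G o _ sI0 uI0).
have M0 : 0 <= OBJ_GChange k G o.
  apply: le_trans (@GC_le R n k G o _ sI0 uI0).
  apply: le_trans (@GC_ge_sum R n k G o hG _ nI0); rewrite lee_fin.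
  by apply: sumr_ge0 => i _.
have hc : forall s : seq 'I_n, size s == k -> uniq s ->
    (\sum_(i <- s) o i)%:E <= OBJ_GChange k G o.
  move=> s ss us; apply: le_trans (@GC_le R n k G o _ ss us).
  by apply: (@GC_ge_sum R n k G o hG); apply/eqP => E; move: ss hk; rewrite E /= => /eqP <-.
move: M0 hT hc; case: (OBJ_GChange k G o) => [c| |] M0 hT hc; last by [].
  rewrite lee_fin in M0.
  have hc' : forall s : seq 'I_n, size s == k -> uniq s -> (\sum_(i <- s) o i <= c)%R.
    by move=> s ss us; rewrite -lee_fin; exact: hc.
  rewrite /OBJ Eprod_compE.
  apply: (@le_trans _ _ (compE G (enum 'I_n) (fun b => Tf k b + c%:E) z0)).
    apply: (@compE_mono _ _ _ hG) => [b Pb|]; last exact: Pos_z0.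
    by apply: (@pw R n k o hkn ho) => //; exact: fs.
  apply: le_trans (@compE_shift _ _ _ hG _ _ _ M0 (@Tf_ge0 R n k) _ (@Pos_z0 _ _)) _.
  rewrite -Eprod_compE.
  apply: (@le_trans _ _ (c%:E + c%:E)); first by apply: leeD.
  by rewrite -EFinD -EFinM lee_fin mulr2n mulrDl mul1r.
by rewrite gt0_muley ?lte_fin // leey.
Qed.
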